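(* Let $\mathcal{C}$ be a class of languages that is closed under inverse injective alphabet morphisms (it is not assumed that $\mathcal{C}$ is closed under reversal). Then for every finitely generated group $G$ and every finite monoid generating set $A \subseteq G$: $\mathrm{wp}_A(G) \in \mathcal{C}$ if and only if $(\mathrm{wp}_A(G))^{\mathrm{rev}} \in \mathcal{C}$.
   Context: A language is a pair $(A,L)$ with $A$ a finite alphabet and $L \subseteq A^*$. An alphabet morphism is a map $h: A^* \to B^*$ ($A,B$ finite alphabets) with $h(uv) = h(u)h(v)$ for all $u,v$; it is injective if it is injective as a map. For $L \subseteq B^*$, $h^{-1}(L) = \{x \in A^* : h(x) \in L\}$. A class $\mathcal{C}$ is closed under inverse injective alphabet morphisms iff for every finite alphabet $B$, every $L \subseteq B^*$ in $\mathcal{C}$ and every injective alphabet morphism $h: A^* \to B^*$, $h^{-1}(L) \in \mathcal{C}$. A monoid generating set of $G$ is a subset $A\subseteq G$ such that every element of $G$ is a product of elements of $A$; $A$ is regarded as a finite alphabet and $\mathrm{wp}_A(G) = \{w \in A^* : w \text{ evaluates to the identity of } G\}$. $L^{\mathrm{rev}} = \{w^{\mathrm{rev}} : w \in L\}$ where $(a_1\cdots a_n)^{\mathrm{rev}} = a_n \cdots a_1$. *)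

(* Defs.v *)
From mathcomp Require Import all_boot.
Set Implicit Arguments. Unset Strict Implicit. Unset Printing Implicit Defensive.

Definition language (A : finType) := seq A -> Prop.

Definition lang_class := forall A : finType, language A -> Prop.

Definition alphabet_morphism (A B : finType) (h : seq A -> seq B) : Prop :=
  forall u v, h (u ++ v) = h u ++ h v.

Definition preimage_lang (A B : finType) (h : seq A -> seq B) (L : language B)
  : language A := fun x => L (h x).

Definition closed_inv_inj_morph (C : lang_class) : Prop :=
  forall (A B : finType) (L : language B) (h : seq A -> seq B),
    C B L -> alphabet_morphism h -> injective h -> C A (preimage_lang h L).

Definition rev_lang (A : finType) (L : language A) : language A :=
  fun w => exists2 v, L v & w = rev v.

Record is_group (G : Type) (mul : G -> G -> G) (one : G) (inv : G -> G) : Prop := {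
  grp_assoc : forall x y z, mul x (mul y z) = mul (mul x y) z;
  grp_mul1 : forall x, mul one x = x;
  grp_mulr1 : forall x, mul x one = x;
  grp_mulV : forall x, mul (inv x) x = one;
  grp_mulVr : forall x, mul x (inv x) = one }.

(* Evaluation of a word over A, where A is identified with a subset of G via the
   injection iota. *)
Definition eval_word (G : Type) (mul : G -> G -> G) (one : G) (A : finType)
  (iota : A -> G) (w : seq A) : G := foldr (fun a g => mul (iota a) g) one w.

Definition monoid_generating (G : Type) (mul : G -> G -> G) (one : G) (A : finType)
  (iota : A -> G) : Prop :=
  forall g : G, exists w : seq A, eval_word mul one iota w = g.

Definition word_problem (G : Type) (mul : G -> G -> G) (one : G) (A : finType)
  (iota : A -> G) : language A :=
  fun w => eval_word mul one iota w = one.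

(* Main.v *)
Require Import Defs.
From mathcomp Require Import all_boot.
From Stdlib Require Import ClassicalEpsilon FunctionalExtensionality PropExtensionality.
Set Implicit Arguments.

Lemma eval_cat (G : Type) (mul : G -> G -> G) (one : G) (inv : G -> G)
  (HG : is_group mul one inv) (A : finType) (iota : A -> G) u v :
  eval_word mul one iota (u ++ v) = mul (eval_word mul one iota u) (eval_word mul one iota v).
Proof.
elim: u => [|a u IH] /=; first by rewrite /eval_word /= (grp_mul1 HG).
by rewrite /eval_word /= -/(eval_word _ _ _ _) IH (grp_assoc HG).
Qed.

Lemma inv_uniq (G : Type) (mul : G -> G -> G) (one : G) (inv : G -> G)
  (HG : is_group mul one inv) a b : mul a b = one -> a = inv b.
Proof.
move=> H; rewrite -[a](grp_mulr1 HG) -(grp_mulVr HG b) (grp_assoc HG) H (grp_mul1 HG) //.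
Qed.

Lemma invM (G : Type) (mul : G -> G -> G) (one : G) (inv : G -> G)
  (HG : is_group mul one inv) x y : inv (mul x y) = mul (inv y) (inv x).
Proof.
symmetry; apply: (inv_uniq HG).
by rewrite -(grp_assoc HG) // [mul (inv x) _](grp_assoc HG) // (grp_mulV HG) // (grp_mul1 HG) // (grp_mulV HG).
Qed.

Lemma inv_inj (G : Type) (mul : G -> G -> G) (one : G) (inv : G -> G)
  (HG : is_group mul one inv) x y : inv x = inv y -> x = y.
Proof.
move=> H; rewrite -[x](grp_mulr1 HG) -(grp_mulV HG y) -H (grp_assoc HG) // (grp_mulVr HG) //.
by rewrite (grp_mul1 HG).
Qed.

Lemma inv_one (G : Type) (mul : G -> G -> G) (one : G) (inv : G -> G)
  (HG : is_group mul one inv) x : (inv x = one) <-> (x = one).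
Proof.
split=> H.
  by rewrite -[x](grp_mulr1 HG) -H (grp_mulVr HG).
by apply: (inv_inj HG); rewrite H -{2}(grp_mulV HG one) (grp_mulr1 HG).
Qed.


Lemma code_inj (A : finType) (code : A -> seq A) (N : nat) :
  (forall a, size (code a) = N) -> 0 < N -> injective code ->
  injective (fun x : seq A => flatten (map code x)).
Proof.
move=> Hs HN Hi; elim=> [|a x IH] [|b y] //=.
- by move=> /(f_equal size); rewrite size_cat Hs /=; case: N HN Hs.
- by move=> /(f_equal size); rewrite size_cat Hs /=; case: N HN Hs.
move=> E.
have Eab : code a = code b.
  by move: (f_equal (take N) E); rewrite !take_size_cat ?Hs.
rewrite (Hi _ _ Eab); congr (_ :: _); apply: IH.
by move: (f_equal (drop N) E); rewrite !drop_size_cat ?Hs.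
Qed.

Theorem proposition2p7 (C : lang_class) (HC : closed_inv_inj_morph C)
  (G : Type) (mul : G -> G -> G) (one : G) (inv : G -> G)
  (HG : is_group mul one inv)
  (A : finType) (iota : A -> G) (Hiota : injective iota)
  (Hgen : monoid_generating mul one iota) :
  C A (word_problem mul one iota) <-> C A (rev_lang (word_problem mul one iota)).
Proof.
pose ev := eval_word mul one iota.
pose w (a : A) := proj1_sig (constructive_indefinite_description _ (Hgen (inv (iota a)))).
have Hw a : ev (w a) = inv (iota a) by rewrite /w; case: constructive_indefinite_description.
pose code (a : A) := flatten [seq (if b == a then w b else b :: w b) | b <- enum A]
                     ++ flatten [seq b :: w b | b <- enum A].
have evflat (f : A -> seq A) s : (forall b, b \in s -> ev (f b) = one) -> ev (flatten (map f s)) = one.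
  elim: s => [|b s IH] H //=.
  rewrite /ev (eval_cat HG) -/ev H ?mem_head // IH ?(grp_mul1 HG) // => c Hc.
  by apply: H; rewrite in_cons Hc orbT.
have evbw b : ev (b :: w b) = one.
  by rewrite /ev /eval_word /= -/(eval_word _ _ _ _) -/ev Hw (grp_mulVr HG).
have evcode a : ev (code a) = inv (iota a).
  rewrite /code /ev (eval_cat HG) -/ev (evflat _ _ (fun b _ => evbw b)) (grp_mulr1 HG) //.
  have : a \in enum A by rewrite mem_enum.
  have : uniq (enum A) by apply: enum_uniq.
  elim: (enum A) => [|b s IH] //= /andP [bs us].
  rewrite in_cons; case: (eqVneq a b) => [E|ne] /= Ha.
    subst b; rewrite /ev (eval_cat HG) -/ev Hw (evflat _ _) ?(grp_mulr1 HG) // => c Hc.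
    case: ifP => [|_]; last by apply: evbw.
    by move=> /eqP E; rewrite -E Hc in bs.
  rewrite /ev (eval_cat HG) -/ev Hw (grp_assoc HG) (grp_mulVr HG) (grp_mul1 HG); exact: IH.
pose M := size (flatten [seq b :: w b | b <- enum A]).
have sz a : size (code a) = M.-1 + M.
  rewrite /code size_cat; congr (_ + _).
  suff -> : M = (size (flatten [seq (if b == a then w b else b :: w b) | b <- enum A])).+1 by [].
  rewrite /M.
  have : a \in enum A by rewrite mem_enum.
  have : uniq (enum A) by apply: enum_uniq.
  elim: (enum A) => [|b s IH] //= /andP [bs us].
  rewrite in_cons; case: (eqVneq a b) => [E|ne] /= Ha.
    subst b; rewrite !size_cat /=; congr ((_ + _).+1).
    congr (size (flatten _)); apply/eq_in_map => c Hc.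
    by case: ifP => // /eqP E; rewrite -E Hc in bs.
  by rewrite !size_cat /= (IH us Ha) addnS.
have codei : injective code.
  move=> a b E; apply: Hiota; apply: (inv_inj HG); by rewrite -!evcode E.
pose h := fun x : seq A => flatten (map code x).
pose h' := fun x : seq A => flatten (map (fun a => rev (code a)) x).
have hinj : injective h.
  case: (pickP A) => [a0 _ | none].
    apply: (@code_inj _ _ (M.-1 + M)) => //.
    have : 0 < M.
      have : a0 \in enum A by rewrite mem_enum.
      by rewrite /M; case: (enum A).
    by rewrite addn_gt0 => ->; rewrite orbT.
  have E z : z = [::] :> seq A by case: z => // a; have := none a.
  by move=> x y _; rewrite (E x) (E y).
have hrev x : rev (h' x) = h (rev x).
  elim: x => [|a x IH] //=.
  by rewrite rev_cat IH /h rev_cons -cats1 map_cat flatten_cat /= cats0 revK.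
have h'inj : injective h'.
  move=> x y E; rewrite -[x]revK -[y]revK; congr rev; apply: hinj.
  by rewrite -!hrev E.
have hmor : alphabet_morphism h by move=> u v; rewrite /h map_cat flatten_cat.
have h'mor : alphabet_morphism h' by move=> u v; rewrite /h' map_cat flatten_cat.
have evh x : ev (h x) = inv (ev (rev x)).
  elim: x => [|a x IH].
    by rewrite /= /ev /eval_word /=; symmetry; apply/(inv_one HG).
  rewrite /h /= -/(h x) /ev (eval_cat HG) -/ev IH evcode rev_cons -cats1.
  rewrite /ev (eval_cat HG) -/ev (invM HG); congr (mul _ _).
  by rewrite /ev /eval_word /= (grp_mulr1 HG).
have revE : rev_lang (word_problem mul one iota) = fun x => ev (rev x) = one.
  apply: functional_extensionality => x; apply: propositional_extensionality.
  split; first by case=> v Hv ->; rewrite revK.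
  by move=> H; exists (rev x); rewrite ?revK.
split=> HW.
  have := HC _ _ _ _ HW hmor hinj.
  congr (C A _); rewrite revE.
  apply: functional_extensionality => x; apply: propositional_extensionality.
  rewrite /preimage_lang /word_problem -/ev evh; exact: (inv_one HG).
have := HC _ _ _ _ HW h'mor h'inj.
congr (C A _); rewrite revE.
apply: functional_extensionality => x; apply: propositional_extensionality.
rewrite /preimage_lang /word_problem -/ev hrev evh revK; exact: (inv_one HG).
Qed.
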